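(* Let $n\ge1$ and let $\mathcal{S}$ be a discrete subgroup of $O(n+1)$ satisfying the spanning property. For any $\Omega\in\mathcal{K}_0(\mathcal{S})$ that is not a polytope, there exists an $\mathcal{S}$-invariant polytope $P\supset\Omega$ such that $\mathcal{F}_{-\infty}(\Omega)<\mathcal{F}_{-\infty}(P)$.
   Context: $\mathcal{K}_0(\mathcal{S})$: convex bodies in $\mathbb{R}^{n+1}$ containing the origin and invariant under all $\phi\in\mathcal{S}$. $\mathcal{F}_{-\infty}(\Omega)=V(\Omega)/(\min_{\mathbb{S}^n}h_\Omega)^{n+1}$, $h_\Omega$ the support function, $V(\Omega)=(n+1)|\Omega|$. Spanning property: for every $a\in\mathbb{S}^n$, $\mathrm{conv}\{\phi(a):\phi\in\mathcal{S}\}$ is a non-degenerate $(n+1)$-dimensional polytope. *)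

(* Defs.v *)
From HB Require Import structures.
From mathcomp Require Import all_boot all_order all_algebra.
From mathcomp Require Import all_classical all_reals all_analysis.
Set Implicit Arguments. Unset Strict Implicit. Unset Printing Implicit Defensive.
Import Order.TTheory GRing.Theory Num.Theory.
Import numFieldNormedType.Exports.
Local Open Scope classical_set_scope.
Local Open Scope ring_scope.

Section Defs.
Variables (R : realType) (d : nat).
Notation V := 'rV[R]_d.
Notation M := 'M[R]_d.

Definition dotp (x y : V) : R := \sum_(i < d) x 0 i * y 0 i.
Definition sphere : set V := [set u | dotp u u = 1].

(* action of a matrix phi on a point x (column convention: phi x) *)
Definition act (phi : M) (x : V) : V := x *m phi^T.

Definition orthogonal (phi : M) : Prop := phi *m phi^T = 1%:M.

Definition subgroup_O (S : set M) : Prop :=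
  S `<=` orthogonal /\ S 1%:M /\
  (forall f g, S f -> S g -> S (f *m g)) /\
  (forall f, S f -> S (invmx f)).

Definition discrete_set (S : set M) : Prop :=
  forall g, S g -> exists2 e : R, 0 < e &
    forall h, S h -> h <> g -> exists i j, e <= `|h i j - g i j|.

Definition conv (A : set V) : set V :=
  [set x | exists (k : nat) (p : 'I_k -> V) (l : 'I_k -> R),
     (forall i, A (p i)) /\ (forall i, 0 <= l i) /\ \sum_(i < k) l i = 1 /\
     x = \sum_(i < k) l i *: p i].

Definition polytope (P : set V) : Prop :=
  exists s : seq V, P = conv [set x | x \in s].

Definition convex_set (A : set V) : Prop :=
  forall x y t, A x -> A y -> 0 <= t <= 1 -> A ((1 - t) *: x + t *: y).

Definition convex_body (K : set V) : Prop :=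
  convex_set K /\ compact K /\ interior K !=set0.

Definition S_invariant (S : set M) (K : set V) : Prop :=
  forall phi, S phi -> act phi @` K = K.

Definition K0 (S : set M) (K : set V) : Prop :=
  convex_body K /\ K 0 /\ S_invariant S K.

Definition spanning (S : set M) : Prop :=
  forall a, sphere a ->
    let Q := conv [set act phi a | phi in S] in polytope Q /\ interior Q !=set0.

Definition supp_fun (K : set V) (u : V) : R := sup [set dotp x u | x in K].
Definition min_supp (K : set V) : R := inf [set supp_fun K u | u in sphere].

(* volume: Jordan (outer) content, infimum of total volumes of finite box covers;
   a box is given by corners lo <= hi, [lo_1,hi_1] x ... x [lo_d,hi_d] *)
Definition box (lo hi : V) : set V := [set x | forall i, lo 0 i <= x 0 i <= hi 0 i].
Definition box_vol (b : V * V) : R := \prod_(i < d) (b.2 0 i - b.1 0 i).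
Definition jordan_vol (K : set V) : R :=
  inf [set \sum_(b <- s) box_vol b | s in
        [set s : seq (V * V) | (forall b, b \in s -> forall i, b.1 0 i <= b.2 0 i) /\
             K `<=` \bigcup_(b in [set b | b \in s]) box b.1 b.2]].

Definition Vol (K : set V) : R := d%:R * jordan_vol K.
Definition F_minf (K : set V) : R := Vol K / (min_supp K) ^+ d.

End Defs.

(* Main.v *)
Require Import Defs.
From HB Require Import structures.
From mathcomp Require Import all_boot all_order all_algebra.
From mathcomp Require Import all_classical all_reals all_analysis.
From mathcomp Require Import ring lra.
Import Order.TTheory GRing.Theory Num.Theory.
Local Open Scope classical_set_scope.
Local Open Scope ring_scope.
Set Implicit Arguments. Unset Strict Implicit. Unset Printing Implicit Defensive.
Import numFieldNormedType.Exports.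

Section Basics.
Variables (R : realType) (d : nat).
Local Notation V := 'rV[R]_d.
Local Notation M := 'M[R]_d.
Local Notation dotp := (@dotp R d).
Local Notation act := (@act R d).

Lemma dotp_mx (x y : V) : dotp x y = (x *m y^T) 0 0.
Proof. by rewrite /Defs.dotp !mxE; apply: eq_bigr => i _; rewrite !mxE. Qed.

Lemma dotpC (x y : V) : dotp x y = dotp y x.
Proof. by rewrite /Defs.dotp; apply: eq_bigr => i _; rewrite mulrC. Qed.

Lemma dotpDl (x y z : V) : dotp (x + y) z = dotp x z + dotp y z.
Proof. by rewrite /Defs.dotp -big_split; apply: eq_bigr => i _; rewrite !mxE mulrDl. Qed.

Lemma dotpZl (a : R) (x z : V) : dotp (a *: x) z = a * dotp x z.
Proof. by rewrite /Defs.dotp mulr_sumr; apply: eq_bigr => i _; rewrite !mxE mulrA. Qed.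

Lemma dotpNl (x z : V) : dotp (- x) z = - dotp x z.
Proof. by rewrite -scaleN1r dotpZl mulN1r. Qed.

Lemma dotpBl (x y z : V) : dotp (x - y) z = dotp x z - dotp y z.
Proof. by rewrite dotpDl dotpNl. Qed.

Lemma dotp0l (z : V) : dotp 0 z = 0.
Proof. by rewrite /Defs.dotp big1 // => i _; rewrite mxE mul0r. Qed.

Lemma dotpDr (x y z : V) : dotp z (x + y) = dotp z x + dotp z y.
Proof. by rewrite dotpC dotpDl !(dotpC z). Qed.
Lemma dotpZr (a : R) (x z : V) : dotp z (a *: x) = a * dotp z x.
Proof. by rewrite dotpC dotpZl dotpC. Qed.
Lemma dotpNr (x z : V) : dotp z (- x) = - dotp z x.
Proof. by rewrite dotpC dotpNl dotpC. Qed.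
Lemma dotpBr (x y z : V) : dotp z (x - y) = dotp z x - dotp z y.
Proof. by rewrite dotpDr dotpNr. Qed.
Lemma dotp0r (z : V) : dotp z 0 = 0.
Proof. by rewrite dotpC dotp0l. Qed.

Lemma dotp_suml (I : Type) (r : seq I) (P : pred I) (F : I -> V) (z : V) :
  dotp (\sum_(i <- r | P i) F i) z = \sum_(i <- r | P i) dotp (F i) z.
Proof.
elim: r => [|i r IH]; first by rewrite !big_nil dotp0l.
by rewrite !big_cons; case: (P i); rewrite ?dotpDl IH.
Qed.

Lemma dotp_sumr (I : Type) (r : seq I) (P : pred I) (F : I -> V) (z : V) :
  dotp z (\sum_(i <- r | P i) F i) = \sum_(i <- r | P i) dotp z (F i).
Proof. by rewrite dotpC dotp_suml; apply: eq_bigr => i _; rewrite dotpC. Qed.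

Lemma dotp_ge0 (x : V) : 0 <= dotp x x.
Proof. by rewrite /Defs.dotp sumr_ge0 // => i _; rewrite -expr2 sqr_ge0. Qed.

Lemma dotp_eq0 (x : V) : dotp x x = 0 -> x = 0.
Proof.
rewrite /Defs.dotp => /eqP; rewrite psumr_eq0 => [/allP H|i _]; last by rewrite -expr2 sqr_ge0.
apply/rowP => i; rewrite mxE; have := H i; rewrite mem_index_enum => /(_ isT) /implyP /(_ isT).
by rewrite mulf_eq0 orbb => /eqP.
Qed.

Lemma dotp_gt0 (x : V) : x != 0 -> 0 < dotp x x.
Proof. by move=> nx; rewrite lt_def dotp_ge0 andbT; apply: contra nx => /eqP/dotp_eq0 ->. Qed.

Lemma act_dotp (phi : M) (x y : V) : dotp (act phi x) y = dotp x (act phi^T y).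
Proof. by rewrite !dotp_mx /Defs.act trmx_mul trmxK mulmxA. Qed.

Lemma act_mul (phi psi : M) (x : V) : act (phi *m psi) x = act phi (act psi x).
Proof. by rewrite /Defs.act trmx_mul mulmxA. Qed.

Lemma act1 (x : V) : act 1%:M x = x.
Proof. by rewrite /Defs.act trmx1 mulmx1. Qed.

Lemma act0 (phi : M) : act phi 0 = 0.
Proof. by rewrite /Defs.act mul0mx. Qed.

Lemma actD (phi : M) x y : act phi (x + y) = act phi x + act phi y.
Proof. by rewrite /Defs.act mulmxDl. Qed.
Lemma actZ (phi : M) a x : act phi (a *: x) = a *: act phi x.
Proof. by rewrite /Defs.act scalemxAl. Qed.
Lemma actB (phi : M) x y : act phi (x - y) = act phi x - act phi y.
Proof. by rewrite /Defs.act mulmxBl. Qed.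
Lemma act_sum (phi : M) (I : Type) (r : seq I) (P : pred I) (F : I -> V) :
  act phi (\sum_(i <- r | P i) F i) = \sum_(i <- r | P i) act phi (F i).
Proof. by rewrite /Defs.act mulmx_suml. Qed.

Lemma orth_tr (phi : M) : Defs.orthogonal phi -> phi^T *m phi = 1%:M.
Proof. by move=> H; apply: mulmx1C. Qed.

Lemma actK (phi : M) x : Defs.orthogonal phi -> act phi^T (act phi x) = x.
Proof. by move=> H; rewrite -act_mul orth_tr // act1. Qed.
Lemma actKV (phi : M) x : Defs.orthogonal phi -> act phi (act phi^T x) = x.
Proof. by move=> H; rewrite -act_mul H act1. Qed.

Lemma act_dotp_orth (phi : M) x y : Defs.orthogonal phi -> dotp (act phi x) (act phi y) = dotp x y.
Proof. by move=> H; rewrite act_dotp actK. Qed.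

Lemma invmx_orth (phi : M) : Defs.orthogonal phi -> invmx phi = phi^T.
Proof.
move=> H; have [u _] := mulmx1_unit H.
by rewrite -[RHS]mul1mx -(mulVmx u) -mulmxA H mulmx1.
Qed.

Lemma subgroup_tr (S : set M) phi : subgroup_O S -> S phi -> S phi^T.
Proof. move=> [HO [_ [_ Hi]]] Sp; rewrite -invmx_orth; [exact: Hi | exact: HO]. Qed.

End Basics.
Section Conv.
Variables (R : realType) (d : nat).
Local Notation V := 'rV[R]_d.
Local Notation M := 'M[R]_d.
Local Notation dotp := (@dotp R d).
Local Notation act := (@act R d).
Local Notation conv := (@Defs.conv R d).

Lemma conv_sub (A : set V) : A `<=` conv A.
Proof.
move=> a Aa; exists 1%N, (fun _ => a), (fun _ => 1); split=> //; split=> [i|]; first exact: ler01.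
by split; rewrite big_ord1 // scale1r.
Qed.

Lemma conv_mono (A B : set V) : A `<=` B -> conv A `<=` conv B.
Proof. by move=> AB x [k [p [l [Ap H]]]]; exists k, p, l; split=> // i; apply: AB. Qed.

Definition cat_fun {T : Type} (k1 k2 : nat) (f : 'I_k1 -> T) (g : 'I_k2 -> T) (i : 'I_(k1 + k2)) : T :=
  match fintype.split i with inl j => f j | inr j => g j end.

Arguments cat_fun {T k1 k2}.

Lemma cat_fun_l T k1 k2 f g j : @cat_fun T k1 k2 f g (lshift k2 j) = f j.
Proof. by rewrite /cat_fun (unsplitK (inl _ j)). Qed.
Lemma cat_fun_r T k1 k2 f g j : @cat_fun T k1 k2 f g (rshift k1 j) = g j.
Proof. by rewrite /cat_fun (unsplitK (inr _ j)). Qed.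

Lemma conv_convex (A : set V) x y t : conv A x -> conv A y -> 0 <= t <= 1 ->
  conv A ((1 - t) *: x + t *: y).
Proof.
move=> [k1 [p1 [l1 [A1 [l1p [s1 ->]]]]]] [k2 [p2 [l2 [A2 [l2p [s2 ->]]]]]] /andP[t0 t1].
exists (k1 + k2)%N, (cat_fun p1 p2), (cat_fun (fun i => (1 - t) * l1 i) (fun i => t * l2 i)).
split; first by move=> i; rewrite /cat_fun; case: (fintype.split i).
split; first by move=> i; rewrite /cat_fun; case: (fintype.split i) => j; apply: mulr_ge0 => //; rewrite subr_ge0.
split.
  rewrite big_split_ord /=.
  under eq_bigr do rewrite cat_fun_l.
  under [X in _ + X]eq_bigr do rewrite cat_fun_r.
  by rewrite -!mulr_sumr s1 s2 !mulr1 subrK.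
rewrite big_split_ord /= !scaler_sumr.
congr (_ + _); apply: eq_bigr => i _; by rewrite ?cat_fun_l ?cat_fun_r scalerA.
Qed.

Lemma conv_dotp_le (A : set V) (v : V) c x : (forall a, A a -> dotp a v <= c) ->
  conv A x -> dotp x v <= c.
Proof.
move=> H [k [p [l [Ap [lp [s1 ->]]]]]].
rewrite dotp_suml; under eq_bigr do rewrite dotpZl.
apply: (@le_trans _ _ (\sum_(i < k) l i * c)); last by rewrite -mulr_suml s1 mul1r.
by apply: ler_sum => i _; apply: ler_wpM2l => //; apply: H.
Qed.

Arguments conv_dotp_le {A v c x}.

Lemma conv_dotp_ge (A : set V) (v : V) c x : (forall a, A a -> c <= dotp a v) ->
  conv A x -> c <= dotp x v.
Proof.
move=> H Cx; rewrite -[c]opprK -[dotp x v]opprK lerN2 -dotpNr.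
by apply: (conv_dotp_le _ Cx) => a Aa; rewrite dotpNr lerN2; apply: H.
Qed.

Arguments conv_dotp_ge {A v c x}.

Lemma dotp_half (x y : V) : 2 * dotp x y <= dotp x x + dotp y y.
Proof.
have := dotp_ge0 (x - y); rewrite !(dotpBl, dotpBr) (dotpC y x).
by move=> h; lra.
Qed.

Lemma conv_normsq_le1 (A : set V) x : (forall a, A a -> dotp a a <= 1) ->
  conv A x -> dotp x x <= 1.
Proof.
move=> H Cx.
have H1 : forall a, A a -> dotp a x <= 1.
  move=> a Aa; rewrite dotpC; apply: (conv_dotp_le _ Cx) => b Ab.
  have := dotp_half b a; have := H a Aa; have := H b Ab; lra.
by apply: (conv_dotp_le _ Cx).
Qed.

Arguments conv_normsq_le1 {A x}.

Lemma conv_act (phi : M) (A : set V) : act phi @` conv A = conv (act phi @` A).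
Proof.
apply/seteqP; split.
  move=> _ [x [k [p [l [Ap [lp [s1 ->]]]]]] <-].
  exists k, (fun i => act phi (p i)), l; split; first by move=> i; exists (p i).
  by do 2 split => //; rewrite act_sum; apply: eq_bigr => i _; rewrite actZ.
move=> _ [k [p [l [Ap [lp [s1 ->]]]]]].
have [q Hq] : exists q : 'I_k -> V, forall i, A (q i) /\ act phi (q i) = p i.
  have H : forall i, exists y, A y /\ act phi y = p i by move=> i; have [y ? ?] := Ap i; exists y.
  by have [q Hq] := boolp.choice H; exists q.
exists (\sum_(i < k) l i *: q i).
  by exists k, q, l; split; [move=> i; case: (Hq i) | split].
by rewrite act_sum; apply: eq_bigr => i _; rewrite actZ; case: (Hq i) => _ ->.
Qed.

(* extreme points of conv of points on the unit sphere *)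
Lemma sphere_extreme (A : set V) (s : seq V) b :
  (forall a, A a -> dotp a a = 1) -> conv A = conv [set x | x \in s] -> A b -> b \in s.
Proof.
move=> HA E Ab.
have : conv [set x | x \in s] b by rewrite -E; apply: conv_sub.
move=> [k [p [l [Ap [lp [s1 bE]]]]]].
have Hp : forall i, conv A (p i) by move=> i; rewrite E; apply: conv_sub.
have Hq : forall i, dotp (p i) (p i) <= 1.
  move=> i; apply: (conv_normsq_le1 _ (Hp i)) => a Aa; by rewrite HA.
have Hb : forall i, dotp (p i) b <= 1.
  move=> i; apply: (conv_dotp_le _ (Hp i)) => a Aa.
  have := dotp_half a b; rewrite HA // HA //; lra.
have Hsum : \sum_(i < k) l i * (1 - dotp (p i) b) = 0.
  under eq_bigr do rewrite mulrBr mulr1.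
  rewrite sumrB s1 -(HA b Ab).
  by rewrite {1}bE dotp_suml; apply/eqP; rewrite subr_eq0; apply/eqP; apply: eq_bigr => i _; rewrite dotpZl.
have Hge : forall i, 0 <= l i * (1 - dotp (p i) b).
  by move=> i; apply: mulr_ge0 => //; rewrite subr_ge0.
have [i li] : exists i, 0 < l i.
  apply/not_existsP => H; move: s1; rewrite big1 => [/eqP|i _]; first by rewrite eq_sym oner_eq0.
  by apply/eqP; rewrite eq_le lp andbT leNgt; apply/negP => h; apply: (H i).
have := psumr_eq0P (fun i _ => Hge i) Hsum (isT : true) (i:=i).
move/eqP; rewrite mulf_eq0 (gt_eqF li) /= subr_eq0 => /eqP hb.
have : dotp (b - p i) (b - p i) = 0.
  apply/eqP; rewrite eq_le dotp_ge0 andbT.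
  rewrite !(dotpBl, dotpBr) (dotpC b (p i)) -hb HA //; have := Hq i; lra.
move/dotp_eq0/eqP; rewrite subr_eq0 => /eqP ->; exact: Ap.
Qed.

End Conv.
Section Norms.
Variables (R : realType) (d : nat).
Local Notation V := 'rV[R]_d.

Lemma norm_coord_le (x : V) i : `|x 0 i| <= `|x|.
Proof.
rewrite [leRHS]/Num.Def.normr /= mx_normrE.
by apply: (le_trans _ (le_bigmax _ _ (0, i))).
Qed.

Lemma norm_le_coord (x : V) c : 0 <= c -> (forall i, `|x 0 i| <= c) -> `|x| <= c.
Proof.
move=> c0 H; rewrite [leLHS]/Num.Def.normr /= mx_normrE.
apply: bigmax_le => // [[i j]] _ /=; by rewrite (ord1 i) H.
Qed.

Lemma ball_normP (x y : V) (e : R) : ball x e y <-> `|x - y| < e.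
Proof. by rewrite -ball_normE. Qed.

Lemma interior_ball (A : set V) z : interior A z -> exists2 e : R, 0 < e & forall y, `|z - y| < e -> A y.
Proof.
move=> /nbhs_ballP [e e0 H]; exists e => // y hy; apply: H; exact/ball_normP.
Qed.

Lemma dotp_norm_le (x y : V) : `|dotp x y| <= d%:R * (`|x| * `|y|).
Proof.
rewrite /Defs.dotp; apply: (le_trans (ler_norm_sum _ _ _)).
have -> : d%:R * (`|x| * `|y|) = \sum_(i < d) `|x| * `|y|.
  by rewrite sumr_const card_ord mulr_natl.
apply: ler_sum => i _; rewrite normrM; apply: ler_pM => //; exact: norm_coord_le.
Qed.

End Norms.

Section Orbit.
Variables (R : realType) (n : nat).
Local Notation d := n.+1.
Local Notation V := 'rV[R]_d.
Local Notation M := 'M[R]_d.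
Local Notation dotp := (@dotp R d).
Local Notation act := (@act R d).
Local Notation conv := (@Defs.conv R d).
Variable S : set M.
Hypothesis HS : subgroup_O S.
Hypothesis Hspan : spanning S.

Definition orbit (a : V) : set V := [set act phi a | phi in S].

Lemma S_orth phi : S phi -> Defs.orthogonal phi.
Proof. by case: HS => H _ /H. Qed.
Lemma S_tr phi : S phi -> S phi^T.
Proof. exact: subgroup_tr. Qed.
Lemma S_mul phi psi : S phi -> S psi -> S (phi *m psi).
Proof. by case: HS => _ [_ [H _]]; apply: H. Qed.
Lemma S_1 : S 1%:M.
Proof. by case: HS => _ []. Qed.

Lemma orbit_act a phi v : S phi -> orbit a v -> orbit a (act phi v).
Proof. by move=> Sp [psi Sq <-]; exists (phi *m psi); [apply: S_mul | rewrite act_mul]. Qed.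

Lemma orbit_self a : orbit a a.
Proof. by exists 1%:M; [exact: S_1 | exact: act1]. Qed.

Lemma orbit_sphere a v : Defs.sphere a -> orbit a v -> Defs.sphere v.
Proof. by rewrite /Defs.sphere /= => Ha [phi Sp <-]; rewrite act_dotp_orth //; exact: S_orth. Qed.

Lemma interior_singleton (a z : V) : ~ interior [set a] z.
Proof.
move=> /interior_ball [e e0 H].
have za : z = a by apply: H; rewrite subrr normr0.
pose y := z + (e / 2) *: (delta_mx 0 0 : V).
have : y = a.
  apply: H; rewrite /y opprD addrA subrr sub0r normrN normrZ.
  apply: (@le_lt_trans _ _ (`|e / 2| * 1)).
    apply: ler_wpM2l => //; apply: norm_le_coord => // i; rewrite mxE.
    by case: (_ && _); rewrite ?normr1 ?normr0.
  by rewrite mulr1 gtr0_norm ?divr_gt0 // ltr_pdivrMr // ltr_pMr // ltr1n.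
rewrite /y -za => /(congr1 (fun v => v - z)); rewrite addrAC subrr add0r => /eqP.
rewrite scaler_eq0.
rewrite mulf_eq0 invr_eq0 (gt_eqF e0) pnatr_eq0 /= => /eqP/matrixP/(_ 0 0).
by rewrite !mxE /= => /eqP; rewrite oner_eq0.
Qed.

Lemma no_fixed (c : V) : (forall phi, S phi -> act phi c = c) -> c = 0.
Proof.
move=> Hc; apply/eqP; apply/negPn/negP => c0.
have q0 := dotp_gt0 c0.
pose a := (Num.sqrt (dotp c c))^-1 *: c.
have sa : Defs.sphere a.
  rewrite /Defs.sphere /= /a dotpZl dotpZr mulrA -expr2 exprVn sqr_sqrtr ?ltW //.
  by rewrite mulVf // gt_eqF.
have [_ [z Hz]] := Hspan sa.
have Oa : orbit a = [set a].
  apply/seteqP; split => [_ [phi Sp <-]|_ ->]; last exact: orbit_self.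
  by rewrite /a actZ Hc.
have : conv (orbit a) `<=` [set a].
  move=> x [k [p [l [Ap [lp [s1 ->]]]]]]; rewrite /=.
  have -> : \sum_(i < k) l i *: p i = \sum_(i < k) l i *: a.
    by apply: eq_bigr => i _; have := Ap i; rewrite Oa => ->.
  by rewrite -scaler_suml s1 scale1r.
move=> sub; apply: (@interior_singleton a z).
move: Hz; rewrite /interior /=; apply: filterS; exact: sub.
Qed.

Lemma orbit_finite a : Defs.sphere a ->
  exists os : seq V, uniq os /\ orbit a = [set x | x \in os].
Proof.
move=> sa; have [[s Es] _] := Hspan sa.
exists (undup [seq x <- s | `[< orbit a x >]]); split; first exact: undup_uniq.
apply/seteqP; split => x /=.
  move=> Ox; rewrite mem_undup mem_filter; apply/andP; split; first exact/asboolP.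
  apply: (sphere_extreme (A := orbit a)) => //.
  by move=> v /(orbit_sphere sa).
by rewrite mem_undup mem_filter => /andP [/asboolP].
Qed.

Lemma orbit_perm a (os : seq V) phi : uniq os -> orbit a = [set x | x \in os] -> S phi ->
  perm_eq (map (act phi) os) os.
Proof.
move=> uos Eos Sp; apply: uniq_perm => //.
  rewrite map_inj_uniq // => x y /(congr1 (act phi^T)); rewrite !actK //; exact: S_orth.
move=> v; apply/mapP/idP => [[x xo ->]|vo].
  have : orbit a (act phi x) by apply: orbit_act => //; rewrite Eos.
  by rewrite Eos.
exists (act phi^T v); last by rewrite actKV //; exact: S_orth.
have : orbit a (act phi^T v) by apply: orbit_act; [exact: S_tr | rewrite Eos].
by rewrite Eos.
Qed.

Lemma orbit_sum0 a (os : seq V) : uniq os -> orbit a = [set x | x \in os] ->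
  \sum_(v <- os) v = 0.
Proof.
move=> uos Eos; apply: no_fixed => phi Sp.
by rewrite act_sum -[RHS](perm_big _ (orbit_perm uos Eos Sp)) big_map.
Qed.

Lemma orbit_pos a w : Defs.sphere a -> w != 0 -> exists2 v, orbit a v & 0 < dotp w v.
Proof.
move=> sa w0; have [os [uos Eos]] := orbit_finite sa.
case: (pselect (exists2 v, orbit a v & 0 < dotp w v)) => // H; exfalso.
have Hle : forall v, v \in os -> dotp w v <= 0.
  move=> v vo; rewrite leNgt; apply/negP => h; apply: H; exists v => //; by rewrite Eos.
have Hz : forall v, v \in os -> dotp w v = 0.
  have : \sum_(v <- os) (- dotp w v) = 0.
    by rewrite sumrN -dotp_sumr (orbit_sum0 uos Eos) dotp0r oppr0.
  have Hge : forall v, v \in os -> 0 <= - dotp w v by move=> v vo; rewrite oppr_ge0; apply: Hle.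
  rewrite big_seq_cond => /eqP; rewrite psumr_eq0 => [/allP Ha v vo|v /andP [vo _]]; last exact: Hge.
  by have := Ha v vo; rewrite /= vo oppr_eq0 => /eqP.
have [_ [z Hz0]] := Hspan sa.
have Hc : forall x, conv (orbit a) x -> dotp x w = 0.
  move=> x Cx; apply/eqP; rewrite eq_le; apply/andP; split.
    apply: (conv_dotp_le _ Cx) => v; rewrite Eos => /Hz; by rewrite dotpC => ->.
  apply: (conv_dotp_ge _ Cx) => v; rewrite Eos => /Hz; by rewrite dotpC => ->.
have [e e0 He] := interior_ball Hz0.
pose t := e / (2 * (`|w| + 1)).
have t0 : 0 < t by rewrite divr_gt0 // mulr_gt0 // ltr_pwDr.
have : conv (orbit a) (z + t *: w).
  apply: He; rewrite opprD addrA subrr sub0r normrN normrZ gtr0_norm //.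
  apply: (@le_lt_trans _ _ (t * (`|w| + 1))); first by apply: ler_wpM2l; [exact: ltW | rewrite lerDl].
  have w1 : `|w| + 1 != 0 by rewrite gt_eqF // ltr_pwDr.
  have -> : t * (`|w| + 1) = e / 2 by rewrite /t; field; rewrite w1.
  by rewrite ltr_pdivrMr // ltr_pMr // ltr1n.
move/Hc; rewrite dotpDl dotpZl (Hc z) ?add0r; last by move: Hz0; apply: nbhs_singleton.
move/eqP; rewrite mulf_eq0 (gt_eqF t0) /= => /eqP h.
by have := dotp_gt0 w0; rewrite h ltxx.
Qed.

End Orbit.
Lemma count_le_in (T : eqType) (a1 a2 : pred T) (s : seq T) :
  (forall x, x \in s -> a1 x -> a2 x) -> (count a1 s <= count a2 s)%N.
Proof.
elim: s => [//|y s IH] H /=; apply: leq_add.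
  by case h1: (a1 y) => //; rewrite (H y (mem_head _ _) h1).
by apply: IH => z zs; apply: H; rewrite inE zs orbT.
Qed.

Lemma count_lt (T : eqType) (a1 a2 : pred T) (s : seq T) :
  (forall x, x \in s -> a1 x -> a2 x) -> (exists2 x, x \in s & a2 x && ~~ a1 x) ->
  (count a1 s < count a2 s)%N.
Proof.
elim: s => [|y s IH] H [x]; first by [].
rewrite inE /= => /orP [/eqP ->|xs] /andP [h2 h1].
  rewrite h2 (negbTE h1) /= add0n add1n ltnS; apply: count_le_in => z zs; apply: H.
  by rewrite inE zs orbT.
have H' : forall z, z \in s -> a1 z -> a2 z by move=> z zs; apply: H; rewrite inE zs orbT.
have := IH H' (ex_intro2 _ _ x xs (introT andP (conj h2 h1))).
case h1y : (a1 y); last by move=> h; rewrite add0n; apply: (leq_trans h); apply: leq_addl.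
by rewrite (H y (mem_head _ _) h1y) /= !add1n ltnS.
Qed.

Lemma seq_argmin (T : eqType) (R : realType) (f : T -> R) (s : seq T) :
  s <> [::] -> exists2 x, x \in s & forall y, y \in s -> f x <= f y.
Proof.
elim: s => [//|y s IH] _.
case: s IH => [|z s] IH.
  by exists y; [exact: mem_head | move=> y'; rewrite inE => /eqP ->].
have [x xs Hx] := IH (fun h => ltac:(discriminate h)).
case: (leP (f y) (f x)) => hxy.
  exists y; first exact: mem_head.
  move=> y'; rewrite inE => /orP [/eqP ->|/Hx h]; [exact: lexx | exact: le_trans h].
exists x; first by rewrite inE xs orbT.
move=> y'; rewrite inE => /orP [/eqP ->|/Hx //]; exact: ltW.
Qed.

Section Polytope.
Variables (R : realType) (n : nat).
Local Notation d := n.+1.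
Local Notation V := 'rV[R]_d.
Local Notation M := 'M[R]_d.
Local Notation dotp := (@dotp R d).
Local Notation act := (@act R d).
Local Notation conv := (@Defs.conv R d).
Variable S : set M.
Hypothesis HS : subgroup_O S.
Hypothesis Hspan : spanning S.
Variable u : V.
Hypothesis su : Defs.sphere u.
Variable os : seq V.
Hypothesis uos : uniq os.
Hypothesis Eos : orbit S u = [set x | x \in os].
Variable h : R.
Hypothesis h0 : 0 <= h.

Definition Pu (x : V) := forall v, v \in os -> dotp x v <= h.
Definition nt (x : V) := count (fun v => dotp x v != h) os.
Definition vertex (x : V) := Pu x /\
  forall w, (forall v, v \in os -> dotp x v = h -> dotp w v = 0) -> w = 0.

Lemma os_pos w : w != 0 -> exists2 v, v \in os & 0 < dotp w v.
Proof. by move=> w0; have [v] := orbit_pos HS Hspan su w0; rewrite Eos => vo; exists v. Qed.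

Lemma os_act phi v : S phi -> v \in os -> act phi v \in os.
Proof. move=> Sp; have : orbit S u (act phi v) <-> (act phi v \in os) by rewrite Eos.
by move=> [H _] vo; apply: H; apply: orbit_act => //; rewrite Eos. Qed.

Lemma step x w : Pu x -> w != 0 -> (forall v, v \in os -> dotp x v = h -> dotp w v = 0) ->
  exists2 t, 0 < t & Pu (x + t *: w) /\ (nt (x + t *: w) < nt x)%N.
Proof.
move=> Px w0 Hw.
have [v0 v0o v0p] := os_pos w0.
pose L := [seq v <- os | 0 < dotp w v].
have L0 : L <> [::].
  move=> HL; have : v0 \in L by rewrite mem_filter v0p v0o.
  by rewrite HL.
pose f v := (h - dotp x v) / dotp w v.
have [v1 v1L Hv1] := seq_argmin f L0.
move: v1L; rewrite mem_filter => /andP [v1p v1o].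
have ntv : forall v, v \in os -> 0 < dotp w v -> dotp x v < h.
  move=> v vo vp; rewrite lt_neqAle Px // andbT; apply/eqP => e.
  by move: vp; rewrite (Hw v vo e) ltxx.
exists (f v1).
  by rewrite /f divr_gt0 // subr_gt0 ntv.
split.
  move=> v vo; rewrite dotpDl dotpZl.
  case: (ltP 0 (dotp w v)) => hv.
    have hh' : f v1 * dotp w v <= h - dotp x v.
      have fv : f v1 <= f v by apply: Hv1; rewrite mem_filter hv vo.
      apply: (le_trans (ler_wpM2r (ltW hv) fv)).
      by rewrite /f divfK ?gt_eqF.
    move: hh'; set a := f v1 * dotp w v; lra.
  apply: (@le_trans _ _ (dotp x v)); last exact: Px.
  rewrite gerDl; apply: mulr_ge0_le0 => //.
  apply: divr_ge0; [rewrite subr_ge0; apply: ltW; exact: ntv v1 v1o v1p | exact: ltW].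
apply: count_lt.
  move=> v vo; apply: contra => /eqP e; apply/eqP.
  by rewrite dotpDl dotpZl (Hw v vo e) mulr0 addr0.
exists v1 => //; apply/andP; split.
  by apply/eqP => e; have := ntv v1 v1o v1p; rewrite e ltxx.
rewrite negbK dotpDl dotpZl /f divfK; last by rewrite gt_eqF.
by rewrite addrC subrK.
Qed.

Lemma Pu_conv_vertex k x : Pu x -> (nt x <= k)%N -> conv vertex x.
Proof.
elim: k x => [|k IH] x Px hk;
  (case: (pselect (vertex x)) => [vx|nvx]; first exact: conv_sub);
  (have [w [w0 Hw]] : exists w, w != 0 /\ (forall v, v \in os -> dotp x v = h -> dotp w v = 0)
    by apply: contrapT => H; apply: nvx; split => // w Hw; apply/eqP;
       apply: contrapT => /negP w0; apply: H; exists w);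
  have [t1 t10 [P1 n1]] := step Px w0 Hw.
  by move: n1; rewrite leqn0 in hk; rewrite (eqP hk).
have w0' : - w != 0 by rewrite oppr_eq0.
have Hw' : forall v, v \in os -> dotp x v = h -> dotp (- w) v = 0.
  by move=> v vo e; rewrite dotpNl (Hw v vo e) oppr0.
have [t2 t20 [P2 n2]] := step Px w0' Hw'.
have C1 := IH _ P1 (leq_trans n1 hk).
have C2 := IH _ P2 (leq_trans n2 hk).
have t12 : 0 < t1 + t2 by rewrite addr_gt0.
have := conv_convex C1 C2 (t := t1 / (t1 + t2)).
have -> : (1 - t1 / (t1 + t2)) *: (x + t1 *: w) + t1 / (t1 + t2) *: (x + t2 *: - w) = x.
  rewrite !scalerDr !scalerA scalerN -scaleNr -!addrA [X in _ + X]addrCA addrA -scalerDl.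
  rewrite -scalerDl.
  have -> : 1 - t1 / (t1 + t2) + t1 / (t1 + t2) = 1 by rewrite subrK.
  have -> : (1 - t1 / (t1 + t2)) * t1 + - (t1 / (t1 + t2) * t2) = 0.
    by field; rewrite gt_eqF.
  by rewrite scale0r addr0 scale1r.
apply; apply/andP; split; first by apply: divr_ge0; exact: ltW.
by rewrite ler_pdivrMr // mul1r lerDl ltW.
Qed.

Definition patt (x : V) : (size os).-tuple bool := map_tuple (fun v => dotp x v == h) (in_tuple os).

Lemma patt_inj x y : vertex x -> vertex y -> patt x = patt y -> x = y.
Proof.
move=> [Px Vx] [Py Vy] /(congr1 val) /= E.
have Ho : forall v, v \in os -> (dotp x v == h) = (dotp y v == h).
  move=> v vo; have [i ilt ->] : exists2 i, (i < size os)%N & v = nth 0 os i.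
    by exists (index v os); [rewrite index_mem | rewrite nth_index].
  by rewrite -(nth_map 0 false (fun v => dotp x v == h) ilt) -(nth_map 0 false (fun v => dotp y v == h) ilt) E.
apply/eqP; rewrite -subr_eq0; apply/eqP; apply: Vx => v vo e.
have : dotp y v == h by rewrite -Ho // e.
by move/eqP => e'; rewrite dotpBl e e' subrr.
Qed.

Definition vpick (t : (size os).-tuple bool) : V := xget 0 [set x | vertex x /\ patt x = t].

Definition Xs : seq V := 0 :: [seq vpick t | t <- enum {: (size os).-tuple bool}].

Lemma XsE : [set x | x \in Xs] = vertex `|` [set 0].
Proof.
apply/seteqP; split => x /=.
  rewrite inE => /orP [/eqP ->|/mapP [t _ ->]]; first by right.
  rewrite /vpick; case: xgetP => [y -> [vy _]|H]; first by left.
  by right.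
move=> [vx|->]; last exact: mem_head.
rewrite inE; apply/orP; right; apply/mapP; exists (patt x); first by rewrite mem_enum.
rewrite /vpick; apply/esym/xget_unique => [//|y [vy py]].
exact: patt_inj.
Qed.

Lemma vertex_Pu x : vertex x -> Pu x.
Proof. by case. Qed.

Lemma Pu0 : Pu 0.
Proof. by move=> v _; rewrite dotp0l. Qed.

Lemma vertex_act phi x : S phi -> vertex x -> vertex (act phi x).
Proof.
move=> Sp [Px Vx]; have Ot := S_orth HS Sp; split.
  move=> v vo; rewrite act_dotp; apply: Px; apply: os_act => //; exact: S_tr.
move=> w Hw; suff : act phi^T w = 0 by move/(congr1 (act phi)); rewrite actKV // act0.
apply: Vx => v vo e; rewrite act_dotp trmxK; apply: Hw; first exact: os_act.
by rewrite act_dotp_orth.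
Qed.

Definition Ppoly : set V := conv [set x | x \in Xs].

Lemma Ppoly_Pu x : Ppoly x -> Pu x.
Proof.
move=> Cx v vo; apply: (conv_dotp_le _ Cx) => y; rewrite XsE => [[vy|->]].
  exact: (vertex_Pu vy).
exact: Pu0.
Qed.

Lemma Pu_Ppoly x : Pu x -> Ppoly x.
Proof.
move=> Px; apply: (conv_mono (A := vertex)); last exact: (@Pu_conv_vertex (nt x)).
by rewrite XsE => y vy; left.
Qed.

Lemma Ppoly_inv : S_invariant S Ppoly.
Proof.
move=> phi Sp; rewrite /Ppoly conv_act; congr conv.
have Ot := S_orth HS Sp.
rewrite XsE; apply/seteqP; split.
  move=> _ [y [vy|->] <-]; first by left; apply: vertex_act.
  by right; rewrite act0.
move=> y [vy|->].
  exists (act phi^T y); first by left; apply: vertex_act => //; exact: S_tr.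
  exact: actKV.
by exists 0; [right|rewrite act0].
Qed.

End Polytope.
Section Lip.
Variables (R : realType) (d : nat).
Local Notation V := 'rV[R]_d.
Lemma lip_cont (f : V -> R) (C : R) : 0 < C -> (forall x y, `|f x - f y| <= C * `|x - y|) -> continuous f.
Proof.
move=> C0 H x; apply/(@cvgrPdist_lt _ _ _ (nbhs x)) => e e0.
apply/nbhs_ballP; exists (e / C); first exact: divr_gt0.
move=> y /ball_normP hy /=; apply: (le_lt_trans (H x y)).
by rewrite -ltr_pdivlMl // mulrC.
Qed.
End Lip.
Section Supp.
Variables (R : realType) (n : nat).
Local Notation d := n.+1.
Local Notation V := 'rV[R]_d.
Local Notation dotp := (@dotp R d).
Local Notation supp := (@supp_fun R d).

Lemma compact_bound (K : set V) : compact K -> exists2 Mb : R, 0 < Mb & forall x, K x -> `|x| <= Mb.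
Proof.
move=> /compact_bounded [M [Mr HM]]; exists (`|M| + 1); first by rewrite ltr_pwDr.
move=> x Kx; apply: (HM (`|M| + 1)) => //.
by apply: (le_lt_trans (real_ler_norm Mr)); rewrite ltrDl.
Qed.

Variables (K : set V) (Mb : R).
Hypothesis K0 : K !=set0.
Hypothesis HMb : forall x, K x -> `|x| <= Mb.

Lemma Mb_ge0 : 0 <= Mb.
Proof. by case: K0 => x Kx; apply: le_trans (HMb Kx). Qed.

Lemma supp_has_sup u : has_sup [set dotp x u | x in K].
Proof.
split; first by case: K0 => x Kx; exists (dotp x u), x.
exists (d%:R * (Mb * `|u|)) => _ [x Kx <-].
apply: (le_trans (ler_norm _)); apply: (le_trans (dotp_norm_le _ _)).
by apply: ler_wpM2l => //; apply: ler_wpM2r => //; apply: HMb.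
Qed.

Lemma supp_ub u x : K x -> dotp x u <= supp K u.
Proof. by move=> Kx; apply: sup_upper_bound; [exact: supp_has_sup | exists x]. Qed.

Lemma supp_le u c : (forall x, K x -> dotp x u <= c) -> supp K u <= c.
Proof.
move=> H; apply: ge_sup; first by case: K0 => x Kx; exists (dotp x u), x.
by move=> _ [x Kx <-]; apply: H.
Qed.

Lemma supp_lip u u' : `|supp K u - supp K u'| <= d%:R * Mb * `|u - u'|.
Proof.
have H : forall u u', supp K u <= supp K u' + d%:R * Mb * `|u - u'|.
  move=> a b; apply: supp_le => x Kx.
  have -> : dotp x a = dotp x b + dotp x (a - b) by rewrite dotpBr addrC subrK.
  apply: lerD; first exact: supp_ub.
  apply: (le_trans (ler_norm _)); apply: (le_trans (dotp_norm_le _ _)).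
  rewrite -mulrA; apply: ler_wpM2l => //; apply: ler_wpM2r => //; exact: HMb.
rewrite ler_norml; apply/andP; split; last by have := H u u'; lra.
have := H u' u; rewrite -normrN opprB; lra.
Qed.

Lemma supp_cont : continuous (supp K).
Proof.
apply: (@lip_cont _ _ _ (d%:R * Mb + 1)); first by rewrite ltr_pwDr // mulr_ge0 // Mb_ge0.
move=> x y; apply: (le_trans (supp_lip x y)); apply: ler_wpM2r => //; rewrite lerDl //.
Qed.

End Supp.

Section MinSupp.
Variables (R : realType) (n : nat).
Local Notation d := n.+1.
Local Notation V := 'rV[R]_d.
Local Notation dotp := (@dotp R d).
Local Notation supp := (@supp_fun R d).

Lemma sphere_compact : compact (@Defs.sphere R d).
Proof.
apply: bounded_closed_compact.
  exists 1; split => // M M1 x /= sx; apply: norm_le_coord => [|i]; first by apply: ltW; apply: lt_trans M1.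
  apply: ltW; apply: le_lt_trans M1.
  rewrite -(@ler_pXn2r _ 2) ?nnegrE // expr1n real_normK ?num_real //.
  rewrite -sx /Defs.dotp (bigD1 i) //= -expr2 lerDl sumr_ge0 // => j _; rewrite -expr2 sqr_ge0 //.
have -> : @Defs.sphere R d = (fun x => dotp x x) @^-1` [set x | x = 1] by [].
apply: preimage_closed; last exact: closed_eq.
move=> x _; rewrite /Defs.dotp.
apply: (@continuous_big _ _ +%R 0 xpredT) => [|i _]; first exact: add_continuous.
by move=> y; apply: continuousM; apply: coord_continuous.
Qed.

Lemma sphere_delta : @Defs.sphere R d (delta_mx 0 0).
Proof.
rewrite /Defs.sphere /= /Defs.dotp (bigD1 0) //= big1 => [|i /negPf i0]; last by rewrite !mxE i0 mulr0.
by rewrite !mxE eqxx mulr1 addr0.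
Qed.

Lemma min_supp_attained (K : set V) : compact K -> K !=set0 ->
  exists2 u0, Defs.sphere u0 & forall u, Defs.sphere u -> supp K u0 <= supp K u.
Proof.
move=> cK K0; have [Mb Mb0 HMb] := compact_bound cK.
have [u0 u0s Hu0] := @EVT_min_rV R d (supp K) (@Defs.sphere R d) (ex_intro _ _ sphere_delta)
  sphere_compact (continuous_subspaceT (supp_cont K0 HMb)).
exists u0; first by move: u0s; rewrite inE.
by move=> u su; apply: Hu0; rewrite inE.
Qed.

Lemma min_suppE (K : set V) h u0 : Defs.sphere u0 -> supp K u0 = h ->
  (forall u, Defs.sphere u -> h <= supp K u) -> min_supp K = h.
Proof.
move=> su0 e H; apply/eqP; rewrite eq_le; apply/andP; split.
  have : lbound [set supp K u | u in @Defs.sphere R d] h by move=> _ [u su <-]; exact: H.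
  move=> lb; rewrite -e; apply: ge_inf; [by exists h | by exists u0].
apply: lb_le_inf; first by exists (supp K u0), u0.
by move=> _ [u su <-]; exact: H.
Qed.

End MinSupp.
Definition rmax (R : realType) (x y : R) := if x <= y then y else x.
Definition rmin (R : realType) (x y : R) := if x <= y then x else y.
Lemma max_cases (R : realType) (x y : R) : x <= rmax x y /\ y <= rmax x y /\ (rmax x y = x \/ rmax x y = y).
Proof. rewrite /rmax; case: (leP x y) => h; by split; [|split]; [lra|lra|auto]. Qed.
Lemma min_cases (R : realType) (x y : R) : rmin x y <= x /\ rmin x y <= y /\ (rmin x y = x \/ rmin x y = y).
Proof. rewrite /rmin; case: (leP x y) => h; by split; [|split]; [lra|lra|auto]. Qed.
Lemma len_split (R : realType) (lo hi l r : R) : lo <= hi -> l <= r ->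
  hi - lo = (rmax (rmax lo l) (rmin hi r) - rmax lo l) + (rmax lo (rmin hi l) - lo) + (hi - rmin hi (rmax lo r)).
Proof.
move=> h1 h2.
have [a1 [a2 a3]] := max_cases lo l; set A := rmax lo l in a1 a2 a3 *.
have [b1 [b2 b3]] := min_cases hi r; set B := rmin hi r in b1 b2 b3 *.
have [c1 [c2 c3]] := max_cases A B; set C := rmax A B in c1 c2 c3 *.
have [e1 [e2 e3]] := min_cases hi l; set E := rmin hi l in e1 e2 e3 *.
have [f1 [f2 f3]] := max_cases lo E; set F := rmax lo E in f1 f2 f3 *.
have [g1 [g2 g3]] := max_cases lo r; set G := rmax lo r in g1 g2 g3 *.
have [k1 [k2 k3]] := min_cases hi G; set K := rmin hi G in k1 k2 k3 *.
case: a3 => ha; case: b3 => hb; case: c3 => hc; case: e3 => he; case: f3 => hf; case: g3 => hg; case: k3 => hk; lra.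
Qed.

Section Telescope.
Variables (R : realType) (d : nat).
Variables (C L : 'I_d -> R).

Definition Gi (i : nat) (x : R) := \prod_(j < d) (if (j < i)%N then C j else if (j == i :> nat) then x else L j).
Definition Tk (k : nat) := \prod_(j < d) (if (j < k)%N then C j else L j).

Lemma Gi_lin (i : 'I_d) x y : Gi i (x - y) = Gi i x - Gi i y.
Proof.
have H : forall z, Gi i z = z * \prod_(j < d | j != i) (if (j < i)%N then C j else L j).
  move=> z; rewrite /Gi (bigD1 i) //= ltnn eqxx; congr (_ * _).
  apply: eq_bigr => j ji; case: ifP => // _; case: eqP => // /val_inj e.
  by rewrite e eqxx in ji.
by rewrite !H mulrBl.
Qed.

Lemma prod_telescope : \prod_j L j - \prod_j C j = \sum_(i < d) Gi i (L i - C i).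
Proof.
have T0 : Tk 0 = \prod_j L j by apply: eq_bigr.
have Td : Tk d = \prod_j C j by apply: eq_bigr => j _; rewrite ltn_ord.
have step : forall i : 'I_d, Tk i - Tk i.+1 = Gi i (L i - C i).
  move=> i; rewrite Gi_lin; congr (_ - _); apply: eq_bigr => j _.
    by case: ifP => // _; case: eqP => // /val_inj ->.
  rewrite ltnS leq_eqVlt; case: (ltnP j i) => hj; first by rewrite orbT.
  by rewrite orbF; case: eqP => // /val_inj ->.
rewrite [RHS](eq_bigr (fun i : 'I_d => Tk i - Tk i.+1)); last by move=> i _; rewrite step.
rewrite -T0 -Td -(big_mkord xpredT (fun k => Tk k - Tk k.+1)).
rewrite -[RHS]opprK -sumrN.
under eq_bigr do rewrite opprB.
by rewrite telescope_sumr // opprB.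
Qed.

End Telescope.
Section Jordan.
Variables (R : realType) (d : nat).
Local Notation V := 'rV[R]_d.
Local Notation box := (@Defs.box R d).
Local Notation bvol := (@Defs.box_vol R d).

Definition valid (s : seq (V * V)) := forall b, b \in s -> forall i, b.1 0 i <= b.2 0 i.
Definition covers (s : seq (V * V)) (K : set V) := K `<=` \bigcup_(b in [set b | b \in s]) box b.1 b.2.
Definition svol (s : seq (V * V)) := \sum_(b <- s) bvol b.

Lemma bvol_ge0 (b : V * V) : (forall i, b.1 0 i <= b.2 0 i) -> 0 <= bvol b.
Proof. by move=> H; apply: prodr_ge0 => i _; rewrite subr_ge0. Qed.

Lemma svol_ge0 s : valid s -> 0 <= svol s.
Proof. by move=> H; rewrite /svol big_seq; apply: sumr_ge0 => b bs; apply: bvol_ge0; apply: H. Qed.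

Lemma J_le (K : set V) s : valid s -> covers s K -> jordan_vol K <= svol s.
Proof.
move=> vs cs; rewrite /jordan_vol; apply: ge_inf; last by exists s.
exists 0 => _ [t [vt ct] <-]; exact: svol_ge0.
Qed.

Lemma J_ge (K : set V) c : (exists s, valid s /\ covers s K) ->
  (forall s, valid s -> covers s K -> c <= svol s) -> c <= jordan_vol K.
Proof.
move=> [s [vs cs]] H; apply: lb_le_inf; first by exists (svol s), s.
by move=> _ [t [vt ct] <-]; apply: H.
Qed.

Lemma J_ge0 (K : set V) : (exists s, valid s /\ covers s K) -> 0 <= jordan_vol K.
Proof. by move=> H; apply: J_ge => // s vs _; apply: svol_ge0. Qed.

Variables l r : V.
Hypothesis lr : forall i, l 0 i <= r 0 i.

Definition cl (b : V * V) j := rmax (b.1 0 j) (l 0 j).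
Definition ce (b : V * V) j := rmax (cl b j) (rmin (b.2 0 j) (r 0 j)).
Definition lt_ (b : V * V) j := rmax (b.1 0 j) (rmin (b.2 0 j) (l 0 j)).
Definition hb (b : V * V) j := rmin (b.2 0 j) (rmax (b.1 0 j) (r 0 j)).

Definition clipb (b : V * V) : V * V := (\row_j cl b j, \row_j ce b j).
Definition lowb (b : V * V) (i : 'I_d) : V * V :=
  (\row_j (if (j < i)%N then cl b j else b.1 0 j),
   \row_j (if (j < i)%N then ce b j else if (j == i :> nat) then lt_ b j else b.2 0 j)).
Definition highb (b : V * V) (i : 'I_d) : V * V :=
  (\row_j (if (j < i)%N then cl b j else if (j == i :> nat) then hb b j else b.1 0 j),
   \row_j (if (j < i)%N then ce b j else b.2 0 j)).
Definition pieces (b : V * V) := [seq lowb b i | i <- index_enum 'I_d] ++ [seq highb b i | i <- index_enum 'I_d].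


Lemma Gi_lin' (C L : 'I_d -> R) (i : 'I_d) x : Gi C L i x = x * \prod_(j < d | j != i) (if (j < i)%N then C j else L j).
Proof.
rewrite /Gi (bigD1 i) //= ltnn eqxx; congr (_ * _).
apply: eq_bigr => j ji; case: ifP => // _; case: eqP => // /val_inj e.
by rewrite e eqxx in ji.
Qed.

Lemma bvol_split (b : V * V) : (forall i, b.1 0 i <= b.2 0 i) ->
  bvol b = bvol (clipb b) + \sum_(p <- pieces b) bvol p.
Proof.
move=> vb.
pose C j := ce b j - cl b j.
pose L j := b.2 0 j - b.1 0 j.
have e1 : bvol b = \prod_j L j by [].
have e2 : bvol (clipb b) = \prod_j C j by apply: eq_bigr => j _; rewrite !mxE.
have e3 : forall i, bvol (lowb b i) = Gi C L i (lt_ b i - b.1 0 i).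
  move=> i; apply: eq_bigr => j _; rewrite !mxE; case: ifP => // _.
  by case: eqP => // /val_inj ->.
have e4 : forall i, bvol (highb b i) = Gi C L i (b.2 0 i - hb b i).
  move=> i; apply: eq_bigr => j _; rewrite !mxE; case: ifP => // _.
  by case: eqP => // /val_inj ->.
rewrite /pieces big_cat /= !big_map.
under eq_bigr do rewrite e3.
under [X in _ + (_ + X)]eq_bigr do rewrite e4.
rewrite -big_split /= e1 e2.
apply/eqP; rewrite addrC -subr_eq prod_telescope; apply/eqP.
apply: eq_bigr => i _; rewrite !Gi_lin' -mulrDl; congr (_ * _).
rewrite /C /L (len_split (vb i) (lr i)) /ce /cl /lt_ /hb; lra.
Qed.

Lemma clipb_valid (b : V * V) : forall i, (clipb b).1 0 i <= (clipb b).2 0 i.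
Proof. by move=> i; rewrite !mxE /ce; case: (max_cases (cl b i) (rmin (b.2 0 i) (r 0 i))). Qed.

Lemma pieces_valid (b : V * V) : (forall i, b.1 0 i <= b.2 0 i) ->
  forall p, p \in pieces b -> forall i, p.1 0 i <= p.2 0 i.
Proof.
move=> vb p; rewrite mem_cat => /orP [] /mapP [k _ ->] j /=; rewrite !mxE.
  case: ifP => _; first by rewrite /ce; case: (max_cases (cl b j) (rmin (b.2 0 j) (r 0 j))).
  case: ifP => _ //; rewrite /lt_; by case: (max_cases (b.1 0 j) (rmin (b.2 0 j) (l 0 j))).
case: ifP => _; first by rewrite /ce; case: (max_cases (cl b j) (rmin (b.2 0 j) (r 0 j))).
case: ifP => _ //; rewrite /hb; by case: (min_cases (b.2 0 j) (rmax (b.1 0 j) (r 0 j))).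
Qed.

Lemma clipb_cover (b : V * V) (y : V) : box b.1 b.2 y -> box l r y -> box (clipb b).1 (clipb b).2 y.
Proof.
move=> Hb Hl i; have /andP [b1 b2] := Hb i; have /andP [l1 l2] := Hl i.
rewrite !mxE /ce /cl.
have [a1 [a2 a3]] := max_cases (b.1 0 i) (l 0 i); set A := rmax _ _ in a1 a2 a3 *.
have [c1 [c2 c3]] := min_cases (b.2 0 i) (r 0 i); set Cc := rmin _ _ in c1 c2 c3 *.
have [e1 [e2 e3]] := max_cases A Cc; set E := rmax _ _ in e1 e2 e3 *.
apply/andP; split; [case: a3 => ->; lra | case: c3 => h; lra].
Qed.

Lemma pieces_cover (b : V * V) (y : V) : box b.1 b.2 y -> ~ box l r y ->
  exists2 p, p \in pieces b & box p.1 p.2 y.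
Proof.
move=> Hb Hl.
pose P k := [exists i : 'I_d, (i == k :> nat) && ~~ (l 0 i <= y 0 i <= r 0 i)].
have exP : exists k, P k.
  apply: contrapT => H; apply: Hl => i; apply/negPn/negP => hi; apply: H.
  by exists i; apply/existsP; exists i; rewrite eqxx hi.
case: (ex_minnP exP) => m /existsP [i /andP [/eqP im hi]] Hmin.
have good : forall j : 'I_d, (j < i)%N -> l 0 j <= y 0 j <= r 0 j.
  move=> j ji; apply/negPn/negP => hj.
  have : P j by apply/existsP; exists j; rewrite eqxx hj.
  by move/Hmin; rewrite -im leqNgt ji.
have Hclip : forall j : 'I_d, (j < i)%N -> cl b j <= y 0 j <= ce b j.
  move=> j ji.
  have /andP [b1 b2] := Hb j; have /andP [l1 l2] := good j ji.
  rewrite /ce /cl.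
  have [a1 [a2 a3]] := max_cases (b.1 0 j) (l 0 j); set A := rmax _ _ in a1 a2 a3 *.
  have [c1 [c2 c3]] := min_cases (b.2 0 j) (r 0 j); set Cc := rmin _ _ in c1 c2 c3 *.
  have [e1 [e2 e3]] := max_cases A Cc; set E := rmax _ _ in e1 e2 e3 *.
  apply/andP; split; [case: a3 => ->; lra | case: c3 => h; lra].
have /andP [bi1 bi2] := Hb i.
rewrite negb_and -!ltNge in hi; case/orP: hi => hi.
  exists (lowb b i); first by rewrite mem_cat; apply/orP; left; apply: map_f; rewrite mem_index_enum.
  move=> j /=; rewrite !mxE; case: ifPn => ji; first exact: Hclip.
  case: eqP => [/val_inj ->|_]; last exact: Hb.
  rewrite /lt_ bi1 /=.
  have [e1 [e2 e3]] := min_cases (b.2 0 i) (l 0 i); set E := rmin _ _ in e1 e2 e3 *.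
  have [f1 [f2 f3]] := max_cases (b.1 0 i) E; set F := rmax _ _ in f1 f2 f3 *.
  by case: e3 => h; lra.
exists (highb b i); first by rewrite mem_cat; apply/orP; right; apply: map_f; rewrite mem_index_enum.
move=> j /=; rewrite !mxE; case: ifPn => ji; first exact: Hclip.
case: eqP => [/val_inj ->|_]; last exact: Hb.
rewrite /hb bi2 andbT.
have [g1 [g2 g3]] := max_cases (b.1 0 i) (r 0 i); set G := rmax _ _ in g1 g2 g3 *.
have [k1 [k2 k3]] := min_cases (b.2 0 i) G; set K := rmin _ _ in k1 k2 k3 *.
by case: g3 => h; lra.
Qed.

Lemma cut_lemma (O P : set V) : O `<=` P -> box l r `<=` P -> (forall y, O y -> ~ box l r y) ->
  (exists s, valid s /\ covers s P) ->
  (exists s, valid s /\ covers s O) ->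
  jordan_vol O + jordan_vol (box l r) <= jordan_vol P.
Proof.
move=> OP BP disj cP cO; apply: J_ge => // s vs cs.
pose s1 := [seq clipb b | b <- s].
pose s2 := flatten [seq pieces b | b <- s].
have -> : svol s = svol s2 + svol s1.
  rewrite /svol /s1 /s2 big_flatten /= !big_map -big_split /= big_seq [RHS]big_seq.
  by apply: eq_bigr => b bs; rewrite addrC; apply: bvol_split; apply: vs.
apply: lerD.
  apply: J_le.
    move=> p /flattenP [q /mapP [b bs ->] pq]; exact: pieces_valid (vs b bs) p pq.
  move=> y Oy; have [b bs Hb] := cs y (OP y Oy).
  have [p pp Hp] := pieces_cover Hb (disj y Oy).
  by exists p => //; apply/flattenP; exists (pieces b) => //; apply: map_f.
apply: J_le.
  by move=> p /mapP [b bs ->]; apply: clipb_valid.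
move=> y By; have [b bs Hb] := cs y (BP y By).
by exists (clipb b); [apply: map_f | apply: clipb_cover].
Qed.

End Jordan.
Section Counting.
Variable R : realType.

Lemma count1D (al be : R) (m : nat) : al <= be ->
  \sum_(j < m) ((al <= j%:R) && (j%:R <= be))%:R <= be - al + 1.
Proof.
move=> ab.
pose cnt m := \sum_(j < m) ((al <= j%:R) && (j%:R <= be))%:R :> R.
suff : forall m, 0 <= cnt m /\ cnt m <= rmax 0 (m%:R - al) /\ cnt m <= rmax 0 (be - al + 1).
  move=> /(_ m) [_ [_ H]]; apply: (le_trans H).
  by have [_ [_ [->|->]]] := max_cases 0 (be - al + 1); lra.
elim=> [|k IH].
  rewrite /cnt big_ord0; have [h1 [_ _]] := max_cases 0 (0%:R - al); have [h2 [_ _]] := max_cases 0 (be - al + 1).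
  by split; [|split].
move: IH => [S0 [S1 S2]]; rewrite /cnt big_ord_recr /= -/(cnt k).
set S := cnt k in S0 S1 S2 *.
have [a1 [a2 a3]] := max_cases 0 (k%:R - al).
have [b1 [b2 b3]] := max_cases 0 (k.+1%:R - al).
have [c1 [c2 c3]] := max_cases 0 (be - al + 1).
rewrite -natr1 in b1 b2 b3 *.
set M1 := rmax 0 (k%:R - al) in S1 a1 a2 a3 *.
set M2 := rmax 0 (k%:R + 1 - al) in b1 b2 b3 *.
set M3 := rmax 0 (be - al + 1) in S2 c1 c2 c3 *.
set K := k%:R in M1 M2 S1 a1 a2 a3 b1 b2 b3 *.
case: (boolP ((al <= K) && (K <= be))) => [/andP [h1 h2]|_] /=; rewrite ?mulr1n ?mulr0n.
  have ? : 0 <= K by rewrite /K.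
  split; first lra.
  by split; case: a3 => ha; lra.
rewrite addr0; split => //; split => //; case: a3 => ha; lra.
Qed.

Lemma prod_delta (I : Type) (r : seq I) (a : I -> R) (dl : R) : 0 <= dl <= 1 -> (forall i, 0 <= a i) ->
  \prod_(i <- r) (a i + dl) <= \prod_(i <- r) a i + dl * (size r)%:R * \prod_(i <- r) (a i + 1).
Proof.
move=> /andP [d0 d1] a0; elim: r => [|x r IH]; first by rewrite !big_nil mulr0 mul0r addr0.
rewrite !big_cons /=.
set P := \prod_(i <- r) (a i + dl) in IH *.
set A := \prod_(i <- r) a i in IH *.
set U := \prod_(i <- r) (a i + 1) in IH *.
have A0 : 0 <= A by apply: prodr_ge0 => i _.
have AU : A <= U by apply: ler_prod => i _; rewrite a0 /= lerDl.
have P0 : 0 <= P by apply: prodr_ge0 => i _; apply: addr_ge0.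
have k0 : 0 <= (size r)%:R :> R by [].
have ax := a0 x.
rewrite -natr1.
set k := (size r)%:R in IH k0 *.
have h1 : (a x + dl) * P <= (a x + dl) * (A + dl * k * U).
  by apply: ler_wpM2l => //; apply: addr_ge0.
apply: (le_trans h1).
have h2 : dl * A <= dl * (U * (a x + 1)).
  by apply: ler_wpM2l => //; apply: (le_trans AU); rewrite ler_peMr // ?lerDr //; apply: le_trans AU.
have h3 : (a x + dl) * (dl * k * U) <= (a x + 1) * (dl * k * U).
  by apply: ler_wpM2r; [apply: mulr_ge0; [apply: mulr_ge0|apply: le_trans AU] | rewrite lerD2l].
have -> : (a x + dl) * (A + dl * k * U) = a x * A + dl * A + (a x + dl) * (dl * k * U) by ring.
have -> : dl * (k + 1) * ((a x + 1) * U) = dl * (U * (a x + 1)) + (a x + 1) * (dl * k * U) by ring.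
lra.
Qed.

Lemma sum_ge_mem (T : eqType) (s : seq T) (F : T -> R) b0 : b0 \in s -> (forall b, b \in s -> 0 <= F b) ->
  F b0 <= \sum_(b <- s) F b.
Proof.
elim: s => [//|x s IH]; rewrite inE big_cons => /orP [/eqP ->|bs] H.
  by rewrite lerDl big_seq sumr_ge0 // => b bs; apply: H; rewrite inE bs orbT.
apply: (le_trans (IH bs _)); first by move=> b bb; apply: H; rewrite inE bb orbT.
by rewrite lerDr; apply: H; exact: mem_head.
Qed.

End Counting.
Section BoxPos.
Variables (R : realType) (d : nat).
Local Notation V := 'rV[R]_d.
Local Notation box := (@Defs.box R d).
Local Notation bvol := (@Defs.box_vol R d).
Variables l r : V.
Hypothesis lr : forall i, l 0 i < r 0 i.

Let Lv i := r 0 i - l 0 i.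
Let Lv_gt0 i : 0 < Lv i. Proof. by rewrite /Lv subr_gt0. Qed.
Let a (b : V * V) i := (b.2 0 i - b.1 0 i) / Lv i.

Lemma grid_claim (s : seq (V * V)) m : valid s -> covers s (box l r) ->
  1 <= \sum_(b <- s) \prod_(i < d) (a b i + (m.+1%:R)^-1).
Proof.
move=> vs cs.
set N := m.+1.
have N0 : 0 < N%:R :> R by rewrite ltr0n.
pose q i (j : 'I_N) := l 0 i + j%:R * Lv i / N%:R.
pose ind (b : V * V) i (j : 'I_N) : R := ((b.1 0 i <= q i j) && (q i j <= b.2 0 i))%:R.
have ind0 : forall b i j, 0 <= ind b i j by move=> b i j; rewrite /ind; case: (_ && _).
have step_a : (N%:R) ^+ d = \sum_(k : {ffun 'I_d -> 'I_N}) 1 :> R.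
  have -> : (N%:R) ^+ d = \prod_(i < d) \sum_(j < N) (1 : R).
    rewrite sumr_const card_ord prodr_const card_ord //.
  rewrite bigA_distr_bigA /=; apply: eq_bigr => k _; exact: big1.
have step_b : \sum_(k : {ffun 'I_d -> 'I_N}) 1 <= \sum_(k : {ffun 'I_d -> 'I_N}) \sum_(b <- s) \prod_i ind b i (k i).
  apply: ler_sum => k _.
  have : box l r (\row_i q i (k i)).
    move=> i; rewrite mxE /q; apply/andP; split.
      rewrite lerDl; apply: divr_ge0 => //; apply: mulr_ge0 => //; exact: ltW.
    have hk : (k i)%:R / N%:R <= 1 :> R by rewrite ler_pdivrMr // mul1r ler_nat ltnW.
    have : (k i)%:R * Lv i / N%:R <= Lv i.
      rewrite mulrAC -[X in _ <= X]mul1r; apply: ler_wpM2r => //; exact: ltW.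
    rewrite /Lv; set t := _ / _; lra.
  move/cs => [b bs Hb].
  have e : \prod_i ind b i (k i) = 1.
    by rewrite big1 // => i _; have := Hb i; rewrite mxE /ind => ->.
  apply: le_trans (sum_ge_mem (F := fun b => \prod_i ind b i (k i)) bs _); first by rewrite e.
  move=> b' _; apply: prodr_ge0 => i _; exact: ind0.
have step_c : \sum_(k : {ffun 'I_d -> 'I_N}) \sum_(b <- s) \prod_i ind b i (k i) =
    \sum_(b <- s) \prod_i \sum_(j < N) ind b i j.
  rewrite exchange_big /=; apply: eq_bigr => b _; by rewrite bigA_distr_bigA.
have step_d : forall b, b \in s -> forall i, \sum_(j < N) ind b i j <= N%:R * (a b i + N%:R^-1).
  move=> b bs i.
  pose al := (b.1 0 i - l 0 i) * N%:R / Lv i.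
  pose be := (b.2 0 i - l 0 i) * N%:R / Lv i.
  have Hj : forall j : 'I_N, ind b i j <= ((al <= j%:R) && (j%:R <= be))%:R.
    move=> j; rewrite /ind.
    have jE : j%:R = (q i j - l 0 i) * N%:R / Lv i.
      by rewrite /q addrC addKr; field; rewrite !gt_eqF.
    case: (boolP ((b.1 0 i <= q i j) && (q i j <= b.2 0 i))) => [/andP [h1 h2]|]; last by move=> _; case: (_ && _).
    rewrite /al /be jE ler_pM2r ?invr_gt0 // ler_pM2r // lerD2r h1.
    by rewrite ler_pM2r ?invr_gt0 // ler_pM2r // lerD2r h2.
  apply: (le_trans (ler_sum _ (fun j _ => Hj j))).
  have hab : al <= be.
    rewrite /al /be ler_pM2r ?invr_gt0 // ler_pM2r // lerD2r; exact: vs.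
  apply: (le_trans (@count1D _ al be N hab)).
  have -> : be - al + 1 = N%:R * (a b i + N%:R^-1).
    by rewrite /al /be /a; field; rewrite !gt_eqF.
  exact: lexx.
have : (N%:R) ^+ d <= (N%:R) ^+ d * \sum_(b <- s) \prod_(i < d) (a b i + N%:R^-1).
  rewrite {1}step_a; apply: (le_trans step_b); rewrite step_c mulr_sumr big_seq [X in _ <= X]big_seq.
  apply: ler_sum => b bs.
  apply: (@le_trans _ _ (\prod_(i < d) (N%:R * (a b i + N%:R^-1)))).
    apply: ler_prod => i _; apply/andP; split; last exact: step_d.
    by apply: sumr_ge0 => j _; apply: ind0.
  by rewrite big_split /= prodr_const card_ord.
by move=> h; rewrite -(ler_pM2l (exprn_gt0 d N0)) mulr1.
Qed.

Lemma box_lower s : valid s -> covers s (box l r) -> (\prod_(i < d) Lv i) / 2 <= svol s.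
Proof.
move=> vs cs.
have vb : forall b, b \in s -> forall i, 0 <= a b i.
  by move=> b bs i; rewrite /a divr_ge0 ?subr_ge0 ?vs // ltW.
pose Kc := \sum_(b <- s) (size (index_enum 'I_d))%:R * \prod_(i <- index_enum 'I_d) (a b i + 1).
have Kc0 : 0 <= Kc.
  rewrite /Kc big_seq; apply: sumr_ge0 => b bs; apply: mulr_ge0 => //.
  by apply: prodr_ge0 => i _; apply: addr_ge0 => //; apply: vb.
pose m := Num.Def.trunc (2 * Kc).
have hm := truncnS_gt (2 * Kc); rewrite -/m in hm.
have del : (0 <= (m.+1%:R : R)^-1) && ((m.+1%:R : R)^-1 <= 1).
  by rewrite invr_ge0 ler0n /= invf_le1 ?ler1n // ltr0n.
have H1 := grid_claim m vs cs.
have H2 : \sum_(b <- s) \prod_(i < d) (a b i + (m.+1%:R)^-1) <=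
          \sum_(b <- s) \prod_(i < d) a b i + (m.+1%:R)^-1 * Kc.
  rewrite /Kc mulr_sumr -big_split /= big_seq [X in _ <= X]big_seq; apply: ler_sum => b bs.
  rewrite mulrA; apply: prod_delta => // i; exact: vb.
have H3 : \sum_(b <- s) \prod_(i < d) a b i = svol s / \prod_(i < d) Lv i.
  by rewrite /svol mulr_suml; apply: eq_bigr => b _; rewrite /a prodf_div.
have H4 : (m.+1%:R)^-1 * Kc <= 1 / 2.
  rewrite mulrC ler_pdivrMr ?ltr0n // mul1r; rewrite mulrC ler_pdivlMr //.
  by apply: ltW; rewrite mulrC.
have LB0 : 0 < \prod_(i < d) Lv i by apply: prodr_gt0 => i _.
have : 1 / 2 <= svol s / \prod_(i < d) Lv i.
  move: (le_trans H1 H2); rewrite H3; move: H4.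
  set X := _ * Kc; set Y := svol s / _; lra.
by rewrite ler_pdivlMr // => h; rewrite mulrC; move: h; rewrite mul1r mulrC.
Qed.

Lemma box_J_pos : 0 < jordan_vol (box l r).
Proof.
have LB0 : 0 < \prod_(i < d) Lv i by apply: prodr_gt0 => i _.
apply: (@lt_le_trans _ _ ((\prod_(i < d) Lv i) / 2)); first by rewrite divr_gt0.
apply: J_ge; last exact: box_lower.
exists [:: (l, r)]; split.
  by move=> b; rewrite inE => /eqP -> i /=; apply: ltW.
by move=> y Hy; exists (l, r) => //=; rewrite inE.
Qed.

End BoxPos.
Section Final.
Variables (R : realType) (n : nat).
Local Notation d := n.+1.
Local Notation V := 'rV[R]_d.
Local Notation M := 'M[R]_d.
Local Notation dotp := (@dotp R d).
Local Notation act := (@act R d).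
Local Notation conv := (@Defs.conv R d).
Local Notation supp := (@supp_fun R d).
Local Notation box := (@Defs.box R d).

Lemma conv_norm_le (A : set V) c x : (forall a, A a -> `|a| <= c) -> conv A x -> `|x| <= c.
Proof.
move=> H [k [p [l [Ap [lp [s1 ->]]]]]].
apply: (le_trans (ler_norm_sum _ _ _)).
apply: (@le_trans _ _ (\sum_(i < k) l i * c)); last by rewrite -mulr_suml s1 mul1r.
apply: ler_sum => i _; rewrite normrZ ger0_norm //; apply: ler_wpM2l => //; exact: H.
Qed.

Lemma bounded_cover (K : set V) c : (forall x, K x -> `|x| <= c) -> 0 <= c ->
  exists s, valid s /\ covers s K.
Proof.
move=> H c0; exists [:: (- c *: const_mx 1, c *: const_mx 1)]; split.
  by move=> b; rewrite inE => /eqP -> i /=; rewrite !mxE !mulr1; lra.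
move=> x Kx; exists (- c *: const_mx 1, c *: const_mx 1); first by rewrite /= inE.
move=> i /=; rewrite !mxE !mulr1 -ler_norml; apply: le_trans (H x Kx); exact: norm_coord_le.
Qed.

Lemma inv_mem (S : set M) (Om : set V) phi x : S_invariant S Om -> S phi -> Om x -> Om (act phi x).
Proof. by move=> Hi Sp Ox; rewrite -(Hi phi Sp); exists x. Qed.

Lemma nonzero_point (Om : set V) : Om° !=set0 -> exists2 x, Om x & x != 0.
Proof.
move=> [z /interior_ball [e e0 H]].
case: (eqVneq z 0) => [z0|nz]; last by exists z => //; apply: H; rewrite subrr normr0.
pose y := (e / 2) *: (delta_mx 0 0 : V).
exists y.
  apply: H; rewrite z0 sub0r normrN /y normrZ.
  apply: (@le_lt_trans _ _ (`|e / 2| * 1)).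
    apply: ler_wpM2l => //; apply: norm_le_coord => // i; rewrite mxE.
    by case: (_ && _); rewrite ?normr1 ?normr0.
  by rewrite mulr1 gtr0_norm ?divr_gt0 // ltr_pdivrMr // ltr_pMr // ltr1n.
rewrite /y scaler_eq0 negb_or mulf_neq0 ?gt_eqF ?invr_gt0 //=.
by apply/negP => /eqP/matrixP/(_ 0 0); rewrite !mxE eqxx /= => /eqP; rewrite oner_eq0.
Qed.

End Final.
Theorem lemma4p3 (R : realType) (n : nat) (S : set 'M[R]_(n.+1))
  (n_ge1 : (1 <= n)%N)
  (HS : subgroup_O S) (Hdisc : discrete_set S) (Hspan : spanning S)
  (Omega : set 'rV[R]_(n.+1)) (HO : K0 S Omega) (Hnp : ~ polytope Omega) :
  exists P : set 'rV[R]_(n.+1),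
    polytope P /\ S_invariant S P /\ Omega `<=` P /\ F_minf Omega < F_minf P.
Proof.
have [[Hcvx [Hcpt HInt]] [Om0 Hinv]] := HO.
have Oz : Omega !=set0 by exists 0.
have [Mb Mb0 HMb] := compact_bound Hcpt.
have [u0 su0 Hu0] := min_supp_attained Hcpt Oz.
set h := supp_fun Omega u0 in Hu0.
have mO : min_supp Omega = h := min_suppE su0 erefl Hu0.
have [x0 Ox0 x0n] := nonzero_point HInt.
have [v [phi Sp vE] vpos] := orbit_pos HS Hspan su0 x0n.
have h0 : 0 < h.
  apply: (lt_le_trans vpos).
  have -> : Defs.dotp x0 v = Defs.dotp (Defs.act phi^T x0) u0 by rewrite act_dotp trmxK vE.
  apply: (supp_ub Oz HMb); exact: inv_mem Hinv (S_tr HS Sp) Ox0.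
have [os [uos Eos]] := orbit_finite HS Hspan su0.
have inos : forall w, (w \in os) = `[< orbit S u0 w >].
  by move=> w; rewrite Eos; apply/idP/asboolP.
have OPu : forall x, Omega x -> Pu os h x.
  move=> x Ox w; rewrite inos => /asboolP [psi Sq <-].
  have -> : Defs.dotp x (Defs.act psi u0) = Defs.dotp (Defs.act psi^T x) u0 by rewrite act_dotp trmxK.
  apply: (supp_ub Oz HMb).
  by apply: inv_mem Hinv _ Ox; apply: S_tr.
pose P := Ppoly os h.
have OP : Omega `<=` P by move=> x Ox; apply: (Pu_Ppoly HS Hspan su0 Eos); exact: OPu.
exists P; split; first by exists (Xs os h).
split; first exact: (Ppoly_inv HS Eos).
split; first exact: OP.
pose cP := \sum_(w <- Xs os h) `|w|.
have HMP : forall x, P x -> `|x| <= cP.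
  move=> x; apply: conv_norm_le => a /= aX; rewrite /cP.
  by apply: (sum_ge_mem (F := fun w => `|w|) aX) => w _.
have Pz : P !=set0 by exists 0; apply: OP.
have cP0 : 0 <= cP by apply: le_trans (HMP 0 (OP 0 Om0)).
have suppPO : forall u, supp_fun Omega u <= supp_fun P u.
  move=> u; apply: (supp_le Oz) => x Ox; apply: (supp_ub Pz HMP); exact: OP.
have mP : min_supp P = h.
  apply: (min_suppE su0).
    apply/eqP; rewrite eq_le; apply/andP; split; last exact: suppPO.
    apply: (supp_le Pz) => x Px; apply: (Ppoly_Pu (ltW h0) Px).
    by rewrite inos; apply/asboolP; exact: orbit_self.
  by move=> u su; apply: le_trans (Hu0 u su) (suppPO u).
have [p Pp nOp] : exists2 p, P p & ~ Omega p.
  apply: contrapT => H; apply: Hnp; exists (Xs os h).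
  apply/seteqP; split; first exact: OP.
  move=> y Py; apply: contrapT => nO; apply: H; by exists y.
have Ocl : closed Omega := compact_closed (@norm_hausdorff _ _) Hcpt.
have [eps eps0 Heps] : exists2 eps : R, 0 < eps & forall y, `|p - y| < eps -> ~ Omega y.
  have : interior (~` Omega) p.
    by move: (closed_openC Ocl); rewrite openE; apply.
  by move/interior_ball => [e e0 He]; exists e => // y hy; exact: He y hy.
have [z Iz] := HInt.
have [e e0 He] := interior_ball Iz.
set D := `|z - p|.
have D0 : 0 <= D by rewrite /D normr_ge0.
pose t := eps / (2 * (D + eps)).
have De : 0 < D + eps by rewrite ltr_wpDl.
have t0 : 0 < t by rewrite divr_gt0 // mulr_gt0.
have t1 : t <= 1.
  rewrite ler_pdivrMr ?mulr_gt0 // mul1r; lra.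
have tz : t * D < eps / 2.
  rewrite /t mulrAC ltr_pdivrMr ?mulr_gt0 //.
  have -> : eps / 2 * (2 * (D + eps)) = eps * (D + eps) by field.
  rewrite ltr_pM2l //; lra.
pose q := (1 - t) *: p + t *: z.
pose rho := rmin (t * e) (eps / 2) / 2.
have te0 : 0 < t * e by rewrite mulr_gt0.
have [m1 [m2 m3]] := min_cases (t * e) (eps / 2).
have rho0 : 0 < rho by rewrite /rho divr_gt0 //; case: m3 => ->; lra.
have rho1 : rho < t * e by rewrite /rho; lra.
have rho2 : rho < eps / 2 by rewrite /rho; lra.
pose l := q - rho *: (const_mx 1 : 'rV[R]_(n.+1)).
pose r := q + rho *: (const_mx 1 : 'rV[R]_(n.+1)).
have lr : forall i, l 0 i < r 0 i by move=> i; rewrite !mxE mulr1; lra.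
have Bq : forall y, box l r y -> `|q - y| <= rho.
  move=> y By; apply: norm_le_coord => [|i]; first exact: ltW.
  have /andP [] := By i; rewrite !mxE mulr1 => y1 y2; rewrite ler_norml; apply/andP; split; lra.
have BP : box l r `<=` P.
  move=> y By; pose z' := z + t^-1 *: (y - q).
  have Oz' : Omega z'.
    apply: He; rewrite /z' opprD addrA subrr sub0r normrN normrZ gtr0_norm ?invr_gt0 //.
    rewrite -distrC mulrC ltr_pdivrMr //; apply: le_lt_trans (Bq y By) _; by rewrite mulrC.
  have := conv_convex Pp (OP _ Oz') (t := t); rewrite t1 ltW //= => /(_ isT).
  have -> : (1 - t) *: p + t *: z' = y.
    rewrite /z' scalerDr scalerA mulfV ?gt_eqF // scale1r addrA.
    by rewrite -/q addrC subrK.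
  by [].
have Bdisj : forall y, Omega y -> ~ box l r y.
  move=> y Oy By; apply: (Heps y) Oy.
  have pq : p - q = t *: (p - z) by rewrite /q scalerBl scale1r scalerBr opprD opprB addrA addrCA subrr addr0.
  have : `|p - y| <= `|p - q| + `|q - y|.
    by have := ler_normD (p - q) (q - y); rewrite addrA subrK.
  rewrite pq normrZ gtr0_norm // (distrC p z) -/D => h1.
  have := Bq y By; lra.
have lrle : forall i, l 0 i <= r 0 i by move=> i; apply: ltW.
have cutP := cut_lemma lrle OP BP Bdisj (bounded_cover HMP cP0) (bounded_cover HMb (ltW Mb0)).
have Jpos := box_J_pos lr.
rewrite /F_minf /Vol mO mP.
have hd : 0 < h ^+ n.+1 by rewrite exprn_gt0.
rewrite ltr_pM2r ?invr_gt0 // ltr_pM2l ?ltr0n //.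
lra.
Qed.
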